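(* Let $H$ be $d^4/dx^4$ in $L_2(\mathbb{R}_+)$ with boundary conditions $u''(0)=\alpha u(0)+\alpha_1u'(0)$, $u'''(0)=-\alpha_2u(0)-\bar\alpha u'(0)$ ($\alpha\in\mathbb{C}$, $\alpha_1,\alpha_2\in\mathbb{R}$). A point $\lambda=k^4$, $k>0$, is an eigenvalue of $H$ if and only if $\alpha=\bar\alpha$, $\alpha_1=(\alpha-k^2)k^{-1}$ and $\alpha_2=(\alpha+k^2)k$. In this case $\Omega'(k)=-2k(\alpha-ik^2)\neq0$, so $k$ is a simple zero of $\Omega$.
   Context: $\alpha_0=\alpha_1\alpha_2-|\alpha|^2$, $\Omega(\zeta)=\alpha_0+(1-i)\alpha_2\zeta+2i\operatorname{Re}\alpha\,\zeta^2-(1+i)\alpha_1\zeta^3-\zeta^4$. $H$ acts as $u\mapsto u^{(4)}$ on $u\in\mathsf{H}^4(\mathbb{R}_+)$ satisfying the boundary conditions; it is self-adjoint. *)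

(* Defs.v *)
From Stdlib Require Import Reals.
From Coquelicot Require Import Coquelicot.

Open Scope R_scope.

Definition L2_plus (f : R -> C) : Prop :=
  ex_RInt_gen (fun x => (Cmod (f x)) ^ 2) (at_right 0) (Rbar_locally p_infty).

(* u belongs to H^4(R_+), with u1,u2,u3,u4 its successive derivatives:
   the derivatives exist on (0,+oo), u, u', u'', u''' extend continuously
   to x = 0 (their boundary values being u(0), u1(0), u2(0), u3(0)),
   and u, ..., u'''' are all in L_2(R_+). *)
Definition H4_plus (u u1 u2 u3 u4 : R -> C) : Prop :=
  (forall x, 0 < x ->
     is_derive u x (u1 x) /\ is_derive u1 x (u2 x) /\
     is_derive u2 x (u3 x) /\ is_derive u3 x (u4 x)) /\
  filterlim u (at_right 0) (locally (u 0)) /\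
  filterlim u1 (at_right 0) (locally (u1 0)) /\
  filterlim u2 (at_right 0) (locally (u2 0)) /\
  filterlim u3 (at_right 0) (locally (u3 0)) /\
  L2_plus u /\ L2_plus u1 /\ L2_plus u2 /\ L2_plus u3 /\ L2_plus u4.

Definition bc_H (alpha : C) (alpha1 alpha2 : R) (u u1 u2 u3 : R -> C) : Prop :=
  u2 0 = (alpha * u 0 + RtoC alpha1 * u1 0)%C /\
  u3 0 = (- (RtoC alpha2 * u 0) - Cconj alpha * u1 0)%C.

Definition eigenvalue_H (alpha : C) (alpha1 alpha2 : R) (lambda : R) : Prop :=
  exists u u1 u2 u3 u4 : R -> C,
    H4_plus u u1 u2 u3 u4 /\
    bc_H alpha alpha1 alpha2 u u1 u2 u3 /\
    (forall x, 0 < x -> u4 x = (RtoC lambda * u x)%C) /\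
    (exists x, 0 < x /\ u x <> RtoC 0).

Definition alpha0 (alpha : C) (alpha1 alpha2 : R) : R :=
  alpha1 * alpha2 - (Cmod alpha) ^ 2.

Definition Omega (alpha : C) (alpha1 alpha2 : R) (z : C) : C :=
  (RtoC (alpha0 alpha alpha1 alpha2)
   + (RtoC 1 - Ci) * RtoC alpha2 * z
   + RtoC 2 * Ci * RtoC (Re alpha) * (z * z)
   - (RtoC 1 + Ci) * RtoC alpha1 * (z * z * z)
   - z * z * z * z)%C.

(* Main.v *)
Require Import Defs.
From Stdlib Require Import Reals.
From Coquelicot Require Import Coquelicot.
From Stdlib Require Import Lra.

Module Helpers.
Local Open Scope R_scope.

Lemma der_fst (f : R -> C) x l : is_derive f x l -> is_derive (fun t => fst (f t)) x (fst l).
Proof.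
  intros H. unfold is_derive in *.
  eapply filterdiff_ext_lin.
  eapply (filterdiff_comp' f (fun t : C => fst t) x); [exact H|].
  apply filterdiff_linear. apply (is_linear_fst (U:=R_NormedModule) (V:=R_NormedModule)).
  intros y. simpl. reflexivity.
Qed.

Lemma der_snd (f : R -> C) x l : is_derive f x l -> is_derive (fun t => snd (f t)) x (snd l).
Proof.
  intros H. unfold is_derive in *.
  eapply filterdiff_ext_lin.
  eapply (filterdiff_comp' f (fun t : C => snd t) x); [exact H|].
  apply filterdiff_linear. apply (is_linear_snd (U:=R_NormedModule) (V:=R_NormedModule)).
  intros y. simpl. reflexivity.
Qed.

Lemma der_pair (f g : R -> R) x a b : is_derive f x a -> is_derive g x b ->
  is_derive (V := C_R_NormedModule) (fun t => (f t, g t) : C) x ((a, b) : C).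
Proof.
  intros Hf Hg. unfold is_derive in *.
  eapply filterdiff_ext_lin.
  apply (filterdiff_comp'_2 (V:=R_NormedModule) (W:=C_R_NormedModule) f g (fun a b => (a,b)) x (fun y => scal y a) (fun y => scal y b) (fun a b => (a,b))); try assumption.
  apply (filterdiff_linear (U := prod_NormedModule _ R_NormedModule R_NormedModule) (V := C_R_NormedModule) (fun t => (fst t, snd t))).
  apply (is_linear_prod (T:=prod_NormedModule _ R_NormedModule R_NormedModule) (U:=R_NormedModule) (V:=R_NormedModule)); [apply is_linear_fst|apply is_linear_snd].
  intros y. reflexivity.
Qed.

Definition Bnd (f : R -> R) : Prop :=
  exists L, forall b, 1 <= b -> ex_RInt f 1 b /\ RInt f 1 b <= L.

Lemma L2_Bnd (u : R -> C) : L2_plus u -> Bnd (fun x => Cmod (u x) ^ 2).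
Proof.
  intros HL. unfold L2_plus, ex_RInt_gen in HL.
  set (f := fun x => Cmod (u x) ^ 2) in *.
  assert (fpos : forall x, 0 <= f x) by (intros; unfold f; apply pow2_ge_0).
  clearbody f. destruct HL as [l H].
  specialize (H (ball l (mkposreal 1 Rlt_0_1)) (locally_ball _ _)).
  destruct H as [Q R HQ HR Hall].
  destruct HQ as [eps HQ]. destruct HR as [M HR].
  set (a := Rmin (eps/2) (1/2)).
  assert (Ha0 : 0 < a) by (unfold a; apply Rmin_glb_lt; generalize (cond_pos eps); lra).
  assert (Ha1 : a < 1) by (unfold a; generalize (Rmin_r (eps/2) (1/2)); lra).
  assert (HQa : Q a).
  { apply HQ; [|exact Ha0]. unfold ball; simpl; unfold AbsRing_ball, abs, minus, plus, opp; simpl.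
    rewrite Rabs_right by lra. generalize (Rmin_l (eps/2) (1/2)) (cond_pos eps). fold a. lra. }
  exists (l + 1). intros b Hb.
  set (b' := Rmax b (Rmax M 1 + 1)).
  assert (Hb'1 : b <= b') by apply Rmax_l.
  assert (Hb'2 : M < b').
  { unfold b'. generalize (Rmax_r b (Rmax M 1 + 1)) (Rmax_l M 1). lra. }
  destruct (Hall a b' HQa (HR _ Hb'2)) as [y [Hy Hyb]].
  simpl in Hyb.
  assert (Hy' : y < l + 1).
  { unfold ball in Hyb; simpl in Hyb; unfold AbsRing_ball, abs, minus, plus, opp in Hyb; simpl in Hyb.
    apply Rabs_def2 in Hyb. lra. }
  assert (Ex : ex_RInt f a b') by (exists y; exact Hy).
  assert (E1b : ex_RInt f 1 b').
  { apply (ex_RInt_Chasles_2 f a 1 b'); [lra|exact Ex]. }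
  assert (Ea1 : ex_RInt f a 1).
  { apply (ex_RInt_Chasles_1 f a 1 b'); [lra|exact Ex]. }
  assert (E1 : ex_RInt f 1 b).
  { apply (ex_RInt_Chasles_1 f 1 b b'); [lra|exact E1b]. }
  assert (Ebb : ex_RInt f b b').
  { apply (ex_RInt_Chasles_2 f 1 b b'); [lra|exact E1b]. }
  split; [exact E1|].
  pose proof (RInt_Chasles f a 1 b' Ea1 E1b) as C1.
  pose proof (RInt_Chasles f 1 b b' E1 Ebb) as C2.
  rewrite (is_RInt_unique f a b' y Hy) in C1.
  change (RInt f a 1 + RInt f 1 b' = y) in C1. change (RInt f 1 b + RInt f b b' = RInt f 1 b') in C2.
  assert (0 <= RInt f a 1) by (apply RInt_ge_0; [lra|exact Ea1|intros; apply fpos]).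
  assert (0 <= RInt f b b') by (apply RInt_ge_0; [lra|exact Ebb|intros; apply fpos]).
  lra.
Qed.

Lemma Bnd_lin f g c : Bnd f -> Bnd g -> 0 <= c -> Bnd (fun x => f x + c * g x).
Proof.
  intros [L1 H1] [L2 H2] Hc. exists (L1 + c * L2). intros b Hb.
  destruct (H1 b Hb) as [E1 I1]. destruct (H2 b Hb) as [E2 I2].
  assert (E2' : ex_RInt (fun x => c * g x) 1 b)
    by (apply (ex_RInt_scal (V:=R_NormedModule) g 1 b c); exact E2).
  split.
  - apply (ex_RInt_plus (V:=R_NormedModule) f (fun x => c * g x)); assumption.
  - pose proof (RInt_plus (V:=R_CompleteNormedModule) f (fun x => c * g x) 1 b E1 E2') as P.
    pose proof (RInt_scal (V:=R_CompleteNormedModule) g 1 b c E2) as P2.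
    change (RInt (fun x : R => c * g x) 1 b = c * RInt g 1 b) in P2.
    change (RInt (fun x : R => f x + c * g x) 1 b = RInt f 1 b + RInt (fun x => c * g x) 1 b) in P.
    rewrite P, P2. apply Rplus_le_compat; [exact I1|]. apply Rmult_le_compat_l; assumption.
Qed.

Lemma Bnd_le F f c : (forall b, 1 <= b -> ex_RInt F 1 b) -> 0 <= c ->
  (forall x, 0 < x -> F x <= c * f x) -> Bnd f -> Bnd F.
Proof.
  intros EF Hc Hle [L H]. exists (c * L). intros b Hb.
  destruct (H b Hb) as [E I]. split; [now apply EF|].
  assert (E' : ex_RInt (fun x => c * f x) 1 b)
    by (apply (ex_RInt_scal (V:=R_NormedModule) f 1 b c); exact E).
  pose proof (RInt_scal (V:=R_CompleteNormedModule) f 1 b c E) as P2.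
  change (RInt (fun x : R => c * f x) 1 b = c * RInt f 1 b) in P2.
  eapply Rle_trans.
  - apply (RInt_le F (fun x => c * f x) 1 b Hb (EF b Hb) E').
    intros x Hx. apply Hle. lra.
  - rewrite P2. apply Rmult_le_compat_l; assumption.
Qed.

Lemma ex_RInt_der (F : R -> R) : (forall x, 0 < x -> ex_derive F x) -> forall b, 1 <= b -> ex_RInt F 1 b.
Proof.
  intros H b Hb. apply (ex_RInt_continuous (V:=R_CompleteNormedModule)). intros z Hz.
  apply (ex_derive_continuous (K:=R_AbsRing) (V:=R_NormedModule) F z). apply H.
  rewrite Rmin_left in Hz by lra. lra.
Qed.

Lemma incr (F F' : R -> R) x y : (forall z, 0 < z -> is_derive F z (F' z)) -> (forall z, 0 < z -> 0 <= F' z) ->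
  0 < x -> x <= y -> F x <= F y.
Proof.
  intros HD HP Hx Hxy. destruct (Req_dec x y) as [->|Hne]; [lra|].
  destruct (MVT_cor2 F F' x y) as [c [Hc Hc2]]; [lra| |].
  - intros c Hc. apply is_derive_Reals. apply HD. lra.
  - assert (0 <= F' c) by (apply HP; lra).
    assert (0 <= F' c * (y - x)) by (apply Rmult_le_pos; lra). lra.
Qed.

Lemma Bnd_pos_zero (F F' : R -> R) : (forall x, 0 < x -> is_derive F x (F' x)) -> (forall x, 0 < x -> 0 <= F' x) ->
  (forall x, 0 < x -> 0 <= F x) -> Bnd F -> forall x, 0 < x -> F x = 0.
Proof.
  intros HD HP Hpos [L HB] x0 Hx0.
  destruct (Req_dec (F x0) 0) as [|Hne]; [assumption|exfalso].
  assert (Hp : 0 < F x0) by (generalize (Hpos x0 Hx0); lra).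
  set (c := Rmax x0 1).
  assert (Hc1 : 1 <= c) by apply Rmax_r. assert (Hc0 : x0 <= c) by apply Rmax_l.
  set (b := c + (Rabs L + 1) / F x0).
  assert (Hq : 0 < (Rabs L + 1) / F x0) by (apply Rdiv_lt_0_compat; [generalize (Rabs_pos L); lra|lra]).
  assert (Hbc : c <= b) by (unfold b; lra).
  destruct (HB b ltac:(lra)) as [E I].
  assert (E1 : ex_RInt F 1 c) by (apply (ex_RInt_Chasles_1 F 1 c b); [lra|exact E]).
  assert (E2 : ex_RInt F c b) by (apply (ex_RInt_Chasles_2 F 1 c b); [lra|exact E]).
  pose proof (RInt_Chasles F 1 c b E1 E2) as Ch. unfold plus in Ch; simpl in Ch.
  assert (0 <= RInt F 1 c) by (apply RInt_ge_0; [lra|exact E1|intros; apply Hpos; lra]).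
  assert (Hlow : RInt (fun _ => F x0) c b <= RInt F c b).
  { apply RInt_le; [lra|apply ex_RInt_const|exact E2|].
    intros z Hz. apply (incr F F'); auto; lra. }
  rewrite RInt_const in Hlow. unfold scal in Hlow; simpl in Hlow; unfold mult in Hlow; simpl in Hlow.
  assert (Heq : (b - c) * F x0 = Rabs L + 1) by (unfold b; field; lra).
  generalize (Rle_abs L). lra.
Qed.

Lemma dplus (f g : R -> R) (x a b : R) : is_derive f x a -> is_derive g x b ->
  is_derive (fun t => f t + g t) x (a + b).
Proof. intros; apply (is_derive_plus (K:=R_AbsRing) (V:=R_NormedModule)); assumption. Qed.

Lemma dscal (f : R -> R) (x c a : R) : is_derive f x a -> is_derive (fun t => c * f t) x (c * a).
Proof. intros; apply is_derive_scal; assumption. Qed.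

Lemma dmult (f g : R -> R) (x a b : R) : is_derive f x a -> is_derive g x b ->
  is_derive (fun t => f t * g t) x (a * g x + f x * b).
Proof. intros; apply (is_derive_mult (K:=R_AbsRing)); auto. intros; apply Rmult_comm. Qed.

Lemma dval (f : R -> R) (x a b : R) : is_derive f x a -> a = b -> is_derive f x b.
Proof. intros H ->; exact H. Qed.

Lemma exd (f : R -> R) : (forall x, 0 < x -> exists l, is_derive f x l) -> forall x, 0 < x -> ex_derive f x.
Proof. intros H x Hx. destruct (H x Hx) as [l Hl]. exists l. exact Hl. Qed.

Lemma cs4 A B C D : (A + B + C + D) * (A + B + C + D) <= 4 * (A * A + B * B + C * C + D * D).
Proof.
  assert (Id : 4 * (A * A + B * B + C * C + D * D) - (A + B + C + D) * (A + B + C + D)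
            = (A - B)^2 + (A - C)^2 + (A - D)^2 + (B - C)^2 + (B - D)^2 + (C - D)^2) by ring.
  generalize (pow2_ge_0 (A - B)) (pow2_ge_0 (A - C)) (pow2_ge_0 (A - D))
            (pow2_ge_0 (B - C)) (pow2_ge_0 (B - D)) (pow2_ge_0 (C - D)). lra.
Qed.

Lemma ode_real (p p1 p2 p3 p4 : R -> R) k : 0 < k ->
  (forall x, 0 < x -> is_derive p x (p1 x) /\ is_derive p1 x (p2 x) /\
     is_derive p2 x (p3 x) /\ is_derive p3 x (p4 x)) ->
  (forall x, 0 < x -> p4 x = k ^ 4 * p x) ->
  Bnd (fun x => p x ^ 2) -> Bnd (fun x => p1 x ^ 2) -> Bnd (fun x => p2 x ^ 2) ->
  Bnd (fun x => p3 x ^ 2) ->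
  forall x, 0 < x -> p1 x = - k * p x /\ p2 x = k ^ 2 * p x /\ p3 x = - k ^ 3 * p x.
Proof.
  intros Hk HD H4 B0 B1 B2 B3.
  set (h := fun x => p3 x + k * p2 x + k ^ 2 * p1 x + k ^ 3 * p x).
  assert (Dh : forall x, 0 < x -> is_derive h x (k * h x)).
  { intros x Hx. destruct (HD x Hx) as [D0 [D1 [D2 D3]]].
    eapply dval.
    - apply dplus; [apply dplus; [apply dplus|]|]; [exact D3|apply dscal; exact D2|apply dscal; exact D1|apply dscal; exact D0].
    - rewrite (H4 x Hx). unfold h. ring. }
  assert (DF : forall x, 0 < x -> is_derive (fun t => h t * h t) x (2 * k * (h x * h x))).
  { intros x Hx. eapply dval; [apply dmult; apply Dh; exact Hx|]. ring. }
  assert (hz : forall x, 0 < x -> h x = 0).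
  { intros x Hx.
    assert (Z : h x * h x = 0).
    { apply (Bnd_pos_zero (fun t => h t * h t) (fun t => 2 * k * (h t * h t))); auto.
      - intros z Hz. apply Rmult_le_pos; [lra|]. apply Rle_0_sqr.
      - intros z Hz. apply Rle_0_sqr.
      - apply (Bnd_le _ (fun x => (p3 x ^ 2 + k ^ 2 * p2 x ^ 2 + k ^ 4 * p1 x ^ 2) + k ^ 6 * p x ^ 2) 4).
        + apply ex_RInt_der. intros z Hz. exists (2 * k * (h z * h z)). apply DF; exact Hz.
        + lra.
        + intros z Hz. unfold h.
          eapply Rle_trans; [apply (cs4 (p3 z) (k * p2 z) (k ^ 2 * p1 z) (k ^ 3 * p z))|right; ring].
        + apply Bnd_lin; [|exact B0|apply pow_le; lra].
          apply Bnd_lin; [|exact B1|apply pow_le; lra].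
          apply Bnd_lin; [exact B3|exact B2|apply pow_le; lra]. }
    apply Rmult_integral in Z. destruct Z; assumption. }
  set (g := fun x => p1 x + k * p x).
  set (g1 := fun x => p2 x + k * p1 x).
  assert (DE : forall x, 0 < x -> is_derive (fun t => g1 t * g1 t + k ^ 2 * (g t * g t)) x 0).
  { intros x Hx. destruct (HD x Hx) as [D0 [D1 [D2 D3]]].
    assert (Dg : is_derive g x (g1 x)) by (apply dplus; [exact D1|apply dscal; exact D0]).
    assert (Dg1 : is_derive g1 x (p3 x + k * p2 x)) by (apply dplus; [exact D2|apply dscal; exact D1]).
    eapply dval.
    - apply dplus; [apply dmult; exact Dg1|apply dscal; apply dmult; exact Dg].
    - pose proof (hz x Hx) as Hh. unfold h in Hh. unfold g, g1.
      replace (p3 x) with (- (k * p2 x + k ^ 2 * p1 x + k ^ 3 * p x)) by lra. ring. }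
  assert (Ez : forall x, 0 < x -> g1 x * g1 x + k ^ 2 * (g x * g x) = 0).
  { apply (Bnd_pos_zero _ (fun _ => 0)); auto.
    - intros; lra.
    - intros z Hz. apply Rplus_le_le_0_compat; [apply Rle_0_sqr|].
      apply Rmult_le_pos; [apply pow_le; lra|apply Rle_0_sqr].
    - apply (Bnd_le _ (fun x => (p2 x ^ 2 + (2 * k ^ 2) * p1 x ^ 2) + k ^ 4 * p x ^ 2) 2).
      + apply ex_RInt_der. intros z Hz. exists 0. apply DE; exact Hz.
      + lra.
      + intros z Hz. unfold g, g1.
        assert (0 <= (p2 z - k * p1 z) ^ 2) by apply pow2_ge_0.
        assert (0 <= k ^ 2 * (p1 z - k * p z) ^ 2) by (apply Rmult_le_pos; [apply pow_le; lra|apply pow2_ge_0]).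
        nra.
      + apply Bnd_lin; [|exact B0|apply pow_le; lra].
        apply Bnd_lin; [exact B2|exact B1|nra]. }
  intros x Hx.
  pose proof (Ez x Hx) as E. pose proof (hz x Hx) as Hh.
  assert (Hg1 : g1 x = 0).
  { assert (0 <= g1 x * g1 x) by apply Rle_0_sqr.
    assert (0 <= k ^ 2 * (g x * g x)) by (apply Rmult_le_pos; [apply pow_le; lra|apply Rle_0_sqr]).
    assert (g1 x * g1 x = 0) by lra. apply Rmult_integral in H1; destruct H1; assumption. }
  assert (Hg : g x = 0).
  { assert (0 <= g1 x * g1 x) by apply Rle_0_sqr.
    assert (0 <= g x * g x) by apply Rle_0_sqr.
    assert (Hk2 : 0 < k ^ 2) by (apply pow_lt; lra).
    assert (g x * g x = 0) by nra. apply Rmult_integral in H1; destruct H1; assumption. }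
  unfold g in Hg. unfold g1 in Hg1. unfold h in Hh.
  split; [lra|]. split; [nra|]. nra.
Qed.

Lemma lim_fst (f : R -> C) : filterlim f (at_right 0) (locally (f 0)) ->
  filterlim (fun x => fst (f x)) (at_right 0) (locally (fst (f 0))).
Proof.
  intro H. generalize (f 0) H. intros [a b] H'.
  eapply filterlim_comp; [exact H'|]. apply (continuous_fst (U:=R_UniformSpace) (V:=R_UniformSpace)).
Qed.

Lemma lim_snd (f : R -> C) : filterlim f (at_right 0) (locally (f 0)) ->
  filterlim (fun x => snd (f x)) (at_right 0) (locally (snd (f 0))).
Proof.
  intro H. generalize (f 0) H. intros [a b] H'.
  eapply filterlim_comp; [exact H'|]. apply (continuous_snd (U:=R_UniformSpace) (V:=R_UniformSpace)).
Qed.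

Lemma lim_rel (f g : R -> R) (a b c : R) : filterlim f (at_right 0) (locally a) ->
  filterlim g (at_right 0) (locally b) -> (forall x, 0 < x -> f x = c * g x) -> a = c * b.
Proof.
  intros Hf Hg Hr.
  assert (Cc : continuous (fun y : R => c * y) b).
  { apply (ex_derive_continuous (K:=R_AbsRing) (V:=R_NormedModule) (fun y => c * y)).
    exists (c * 1). apply (dscal (fun y => y) b c 1). apply (is_derive_id (K:=R_AbsRing)). }
  assert (Hcg : filterlim (fun x => c * g x) (at_right 0) (locally (c * b))).
  { exact (filterlim_comp _ _ _ g (fun y => c * y) (at_right 0) (locally b) (locally (c * b)) Hg Cc). }
  assert (Hcf : filterlim (fun x => c * g x) (at_right 0) (locally a)).
  { apply (filterlim_ext_loc f (fun x => c * g x)); [|exact Hf].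
    exists (mkposreal 1 Rlt_0_1). intros y _ Hy. apply Hr; exact Hy. }
  pose proof (Proper_StrongProper _ (at_right_proper_filter 0)) as PF.
  exact (filterlim_locally_unique (K:=R_AbsRing) (V:=R_NormedModule) (F:=at_right 0)
    (fun x => c * g x) a (c * b) Hcf Hcg).
Qed.

Lemma decr_lim_zero (F F' : R -> R) x : (forall z, 0 < z -> is_derive F z (F' z)) ->
  (forall z, 0 < z -> F' z <= 0) -> filterlim F (at_right 0) (locally 0) -> 0 < x -> F x <= 0.
Proof.
  intros HD HN HL Hx.
  destruct (Rle_lt_dec (F x) 0) as [|Hp]; [assumption|exfalso].
  assert (Hmon : forall y, 0 < y -> y <= x -> F x <= F y).
  { intros y Hy Hyx.
    assert (- F y <= - F x); [|lra].
    apply (incr (fun t => - F t) (fun t => - F' t)); auto.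
    - intros z Hz. apply (is_derive_ext (fun t => -1 * F t)); [intros; simpl; ring|].
      eapply dval; [apply (dscal F z (-1) (F' z)); apply HD; exact Hz|ring].
    - intros z Hz. generalize (HN z Hz). lra. }
  pose proof (proj1 (filterlim_locally (T:=R) (U:=R_UniformSpace) (F:=at_right 0) F 0) HL) as HL2. clear HL. rename HL2 into HL.
  destruct (HL (mkposreal (F x / 2) ltac:(lra))) as [d Hd].
  set (y := Rmin (d / 2) x).
  assert (Hy0 : 0 < y) by (unfold y; apply Rmin_glb_lt; [generalize (cond_pos d)|]; lra).
  assert (Hyx : y <= x) by apply Rmin_r.
  assert (Hyd : y <= d / 2) by apply Rmin_l.
  assert (B : ball 0 d y).
  { unfold ball; simpl; unfold AbsRing_ball, abs, minus, plus, opp; simpl.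
    rewrite Rabs_right by lra. generalize (cond_pos d). lra. }
  specialize (Hd y B Hy0). unfold ball in Hd; simpl in Hd; unfold AbsRing_ball, abs, minus, plus, opp in Hd; simpl in Hd.
  apply Rabs_def2 in Hd. generalize (Hmon y Hy0 Hyx). lra.
Qed.

Lemma sq_le_Cmod_fst (z : C) : fst z ^ 2 <= Cmod z ^ 2.
Proof.
  unfold Cmod. rewrite pow2_sqrt by (apply Rplus_le_le_0_compat; apply pow2_ge_0).
  generalize (pow2_ge_0 (snd z)). lra.
Qed.

Lemma sq_le_Cmod_snd (z : C) : snd z ^ 2 <= Cmod z ^ 2.
Proof.
  unfold Cmod. rewrite pow2_sqrt by (apply Rplus_le_le_0_compat; apply pow2_ge_0).
  generalize (pow2_ge_0 (fst z)). lra.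
Qed.

Lemma Bnd_comp (u v : R -> C) (pr : C -> R) :
  (forall z, pr z ^ 2 <= Cmod z ^ 2) ->
  (forall x, 0 < x -> is_derive (fun t => pr (u t)) x (pr (v x))) ->
  L2_plus u -> Bnd (fun x => pr (u x) ^ 2).
Proof.
  intros Hle HD HL.
  apply (Bnd_le _ (fun x => Cmod (u x) ^ 2) 1).
  - apply ex_RInt_der. intros z Hz. eexists.
    apply (is_derive_pow (fun t => pr (u t)) 2 z (pr (v z))). apply HD; exact Hz.
  - lra.
  - intros x _. rewrite Rmult_1_l. apply Hle.
  - apply L2_Bnd; exact HL.
Qed.

Lemma comp_rel (u u1 u2 u3 u4 : R -> C) (pr : C -> R) k : 0 < k ->
  (forall z, pr z ^ 2 <= Cmod z ^ 2) ->
  (forall (f : R -> C) x l, is_derive f x l -> is_derive (fun t => pr (f t)) x (pr l)) ->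
  (forall z, pr (RtoC (k ^ 4) * z)%C = k ^ 4 * pr z) ->
  H4_plus u u1 u2 u3 u4 ->
  (forall x, 0 < x -> u4 x = (RtoC (k ^ 4) * u x)%C) ->
  forall x, 0 < x -> pr (u1 x) = - k * pr (u x) /\ pr (u2 x) = k ^ 2 * pr (u x) /\
     pr (u3 x) = - k ^ 3 * pr (u x).
Proof.
  intros Hk Hle Hder Hmul [HD [L0 [L1 [L2 [L3 [Q0 [Q1 [Q2 [Q3 Q4]]]]]]]]] Heig.
  apply (ode_real (fun t => pr (u t)) (fun t => pr (u1 t)) (fun t => pr (u2 t))
    (fun t => pr (u3 t)) (fun t => pr (u4 t)) k Hk).
  - intros x Hx. destruct (HD x Hx) as [D0 [D1 [D2 D3]]].
    split; [exact (Hder u x (u1 x) D0)|]. split; [exact (Hder u1 x (u2 x) D1)|].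
    split; [exact (Hder u2 x (u3 x) D2)|exact (Hder u3 x (u4 x) D3)].
  - intros x Hx. rewrite (Heig x Hx). apply Hmul.
  - apply (Bnd_comp u u1 pr Hle); [|exact Q0]. intros x Hx; apply Hder, (HD x Hx).
  - apply (Bnd_comp u1 u2 pr Hle); [|exact Q1]. intros x Hx; apply Hder, (HD x Hx).
  - apply (Bnd_comp u2 u3 pr Hle); [|exact Q2]. intros x Hx; apply Hder, (HD x Hx).
  - apply (Bnd_comp u3 u4 pr Hle); [|exact Q3]. intros x Hx; apply Hder, (HD x Hx).
Qed.

Lemma comp_zero (u u1 : R -> C) (pr : C -> R) k : 0 < k ->
  (forall (f : R -> C) x l, is_derive f x l -> is_derive (fun t => pr (f t)) x (pr l)) ->
  (forall x, 0 < x -> is_derive u x (u1 x)) ->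
  (forall x, 0 < x -> pr (u1 x) = - k * pr (u x)) ->
  filterlim (fun x => pr (u x)) (at_right 0) (locally 0) ->
  forall x, 0 < x -> pr (u x) = 0.
Proof.
  intros Hk Hder HD Hr HL x Hx.
  assert (H : pr (u x) ^ 2 <= 0).
  { apply (decr_lim_zero (fun t => pr (u t) ^ 2) (fun t => INR 2 * pr (u1 t) * pr (u t) ^ 1)); auto.
    - intros z Hz. apply is_derive_pow. apply Hder, HD, Hz.
    - intros z Hz. rewrite (Hr z Hz). simpl. generalize (pow2_ge_0 (pr (u z))). nra.
    - replace 0 with (0 ^ 2) at 2 by ring.
      assert (Cc : continuous (fun y : R => y ^ 2) 0).
      { apply (ex_derive_continuous (K:=R_AbsRing) (V:=R_NormedModule) (fun y => y ^ 2)).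
        eexists. apply (is_derive_pow (fun y => y) 2 0 1). apply (is_derive_id (K:=R_AbsRing)). }
      exact (filterlim_comp _ _ _ (fun x => pr (u x)) (fun y => y ^ 2) (at_right 0) (locally 0) (locally (0 ^ 2)) HL Cc). }
  generalize (pow2_ge_0 (pr (u x))). intros. nra.
Qed.

Lemma forward (alpha : C) (a1 a2 k : R) : 0 < k -> eigenvalue_H alpha a1 a2 (k ^ 4) ->
  snd alpha = 0 /\ a1 = (fst alpha - k ^ 2) / k /\ a2 = (fst alpha + k ^ 2) * k.
Proof.
  intros Hk [u [u1 [u2 [u3 [u4 [H4 [[B2 B3] [Heig [x0 [Hx0 Hnz]]]]]]]]]].
  pose proof H4 as [HD [L0 [L1 [L2 [L3 _]]]]].
  assert (RF := comp_rel u u1 u2 u3 u4 fst k Hk sq_le_Cmod_fst der_fst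
    ltac:(intros; simpl; ring) H4 Heig).
  assert (RS := comp_rel u u1 u2 u3 u4 snd k Hk sq_le_Cmod_snd der_snd
    ltac:(intros; simpl; ring) H4 Heig).
  assert (e1f := lim_rel _ _ _ _ _ (lim_fst u1 L1) (lim_fst u L0) (fun x Hx => proj1 (RF x Hx))).
  assert (e2f := lim_rel _ _ _ _ _ (lim_fst u2 L2) (lim_fst u L0) (fun x Hx => proj1 (proj2 (RF x Hx)))).
  assert (e3f := lim_rel _ _ _ _ _ (lim_fst u3 L3) (lim_fst u L0) (fun x Hx => proj2 (proj2 (RF x Hx)))).
  assert (e1s := lim_rel _ _ _ _ _ (lim_snd u1 L1) (lim_snd u L0) (fun x Hx => proj1 (RS x Hx))).
  assert (e2s := lim_rel _ _ _ _ _ (lim_snd u2 L2) (lim_snd u L0) (fun x Hx => proj1 (proj2 (RS x Hx)))).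
  assert (e3s := lim_rel _ _ _ _ _ (lim_snd u3 L3) (lim_snd u L0) (fun x Hx => proj2 (proj2 (RS x Hx)))).
  assert (Hpos : 0 < fst (u 0) ^ 2 + snd (u 0) ^ 2).
  { destruct (Req_dec (fst (u 0)) 0) as [Hf|Hf]; destruct (Req_dec (snd (u 0)) 0) as [Hs|Hs].
    - exfalso. apply Hnz.
      assert (zf := comp_zero u u1 fst k Hk der_fst (fun x Hx => proj1 (HD x Hx))
        (fun x Hx => proj1 (RF x Hx)) ltac:(pose proof (lim_fst u L0) as LL; rewrite Hf in LL; exact LL) x0 Hx0).
      assert (zs := comp_zero u u1 snd k Hk der_snd (fun x Hx => proj1 (HD x Hx))
        (fun x Hx => proj1 (RS x Hx)) ltac:(pose proof (lim_snd u L0) as LL; rewrite Hs in LL; exact LL) x0 Hx0).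
      rewrite (surjective_pairing (u x0)), zf, zs. reflexivity.
    - generalize (pow2_ge_0 (fst (u 0))). assert (0 < snd (u 0) ^ 2) by (apply pow2_gt_0; exact Hs). lra.
    - generalize (pow2_ge_0 (snd (u 0))). assert (0 < fst (u 0) ^ 2) by (apply pow2_gt_0; exact Hf). lra.
    - generalize (pow2_ge_0 (snd (u 0))). assert (0 < fst (u 0) ^ 2) by (apply pow2_gt_0; exact Hf). lra. }
  destruct alpha as [ar ai].
  pose proof (f_equal fst B2) as B2f. pose proof (f_equal snd B2) as B2s.
  pose proof (f_equal fst B3) as B3f. pose proof (f_equal snd B3) as B3s.
  simpl in B2f, B2s, B3f, B3s.
  rewrite e1f, e2f in B2f. rewrite e1s, e2s in B2s.
  rewrite e1f, e3f in B3f. rewrite e1s, e3s in B3s.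
  simpl.
  set (p := fst (u 0)) in *. set (q := snd (u 0)) in *.
  set (s := k ^ 2 - ar + a1 * k).
  assert (S1 : s * p = - ai * q) by (unfold s; lra).
  assert (S2 : s * q = ai * p) by (unfold s; lra).
  assert (Hs0 : s = 0).
  { assert (s * (p ^ 2 + q ^ 2) = 0).
    { replace (s * (p ^ 2 + q ^ 2)) with ((s * p) * p + (s * q) * q) by ring.
      rewrite S1, S2. ring. }
    apply Rmult_integral in H. destruct H; [assumption|lra]. }
  assert (Hai : ai = 0).
  { assert (ai * (p ^ 2 + q ^ 2) = 0).
    { replace (ai * (p ^ 2 + q ^ 2)) with ((ai * p) * p - (- ai * q) * q) by ring.
      rewrite <- S1, <- S2, Hs0. ring. }
    apply Rmult_integral in H. destruct H; [assumption|lra]. }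
  subst ai.
  set (t := a2 - k ^ 3 - ar * k).
  assert (T1 : t * p = 0) by (unfold t; lra).
  assert (T2 : t * q = 0) by (unfold t; lra).
  assert (Ht : t = 0).
  { assert (t * (p ^ 2 + q ^ 2) = 0).
    { replace (t * (p ^ 2 + q ^ 2)) with ((t * p) * p + (t * q) * q) by ring.
      rewrite T1, T2. ring. }
    apply Rmult_integral in H. destruct H; [assumption|lra]. }
  split; [reflexivity|]. unfold s in Hs0; unfold t in Ht.
  split.
  - replace ar with (k ^ 2 + a1 * k) by lra. field. lra.
  - replace a2 with (k ^ 3 + ar * k) by lra. ring.
Qed.

Lemma lim_e (k : R) : 0 < k -> is_lim (fun x => exp (- (k * x))) p_infty 0.
Proof.
  intros Hk.
  apply (is_lim_comp (fun y => exp y) (fun x => - (k * x)) p_infty 0 m_infty).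
  - exact is_lim_exp_m.
  - assert (H := is_lim_opp _ _ _ (is_lim_scal_l (fun y => y) k p_infty p_infty (is_lim_id p_infty))).
    simpl in H. destruct (Rle_dec 0 k) as [h|h]; [|lra].
    destruct (Rle_lt_or_eq_dec 0 k h) as [h'|h']; [|lra]. exact H.
  - exists 0. intros y _ Hy. discriminate.
Qed.

Lemma L2_v (c k : R) : 0 < k -> L2_plus (fun x => RtoC (c * exp (- (k * x)))).
Proof.
  intros Hk. unfold L2_plus.
  set (G := fun x => - (c ^ 2 / (2 * k)) * exp (- ((2 * k) * x))).
  assert (DG : forall x, is_derive G x (c ^ 2 * exp (- ((2 * k) * x)))).
  { intros x. unfold G. auto_derive; [auto|field; lra]. }
  assert (Hf : forall x, Cmod (RtoC (c * exp (- (k * x)))) ^ 2 = c ^ 2 * exp (- ((2 * k) * x))).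
  { intros x. rewrite Cmod_R, <- Rsqr_pow2, <- Rsqr_abs, Rsqr_pow2.
    replace (- (2 * k * x)) with (- (k * x) + - (k * x)) by ring. rewrite exp_plus. ring. }
  exists (0 - G 0).
  apply (is_RInt_gen_ext (Fa:=at_right 0) (Fb:=Rbar_locally p_infty) (Derive G)).
  - apply filter_forall. intros ab x _. rewrite Hf. apply is_derive_unique, DG.
  - apply (is_RInt_gen_Derive (Fa:=at_right 0) (Fb:=Rbar_locally p_infty)).
    + apply filter_forall. intros ab x _. eexists. apply DG.
    + apply filter_forall. intros ab x _.
      apply (continuous_ext (fun x => c ^ 2 * exp (- ((2 * k) * x)))).
      { intros y. symmetry. apply is_derive_unique, DG. }
      apply (ex_derive_continuous (K:=R_AbsRing) (V:=R_NormedModule)). auto_derive. auto.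
    + apply (filterlim_filter_le_1 (F:=locally 0) G); [exact (filter_le_within (F:=locally 0) (fun u => 0 < u))|].
      apply (ex_derive_continuous (K:=R_AbsRing) (V:=R_NormedModule)). eexists. apply DG.
    + assert (H := is_lim_scal_l _ (- (c ^ 2 / (2 * k))) _ _ (lim_e (2 * k) ltac:(lra))).
      simpl in H. rewrite Rmult_0_r in H. exact H.
Qed.

Definition v (k c : R) : R -> C := fun x => RtoC (c * exp (- (k * x))).

Lemma Dv (k c c' x : R) : c' = - k * c -> is_derive (v k c) x (v k c' x).
Proof.
  intros ->. unfold v.
  apply (is_derive_ext (fun t => (c * exp (- (k * t)), 0) : C)); [intros; reflexivity|].
  apply der_pair.
  - auto_derive; [auto|ring].
  - apply (is_derive_const (K:=R_AbsRing) (V:=R_NormedModule)).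
Qed.

Lemma Lv (k c : R) : filterlim (v k c) (at_right 0) (locally (v k c 0)).
Proof.
  apply (filterlim_filter_le_1 (F:=locally 0) (v k c)); [exact (filter_le_within (F:=locally 0) (fun u => 0 < u))|].
  apply (ex_derive_continuous (K:=R_AbsRing) (V:=C_R_NormedModule)). eexists. apply Dv. reflexivity.
Qed.

Lemma backward (alpha : C) (a1 a2 k : R) : 0 < k ->
  snd alpha = 0 -> a1 = (fst alpha - k ^ 2) / k -> a2 = (fst alpha + k ^ 2) * k ->
  eigenvalue_H alpha a1 a2 (k ^ 4).
Proof.
  intros Hk Hi Ha1 Ha2.
  exists (v k 1), (v k (- k)), (v k (k ^ 2)), (v k (- k ^ 3)), (v k (k ^ 4)).
  split; [|split; [|split]].
  - split; [|split; [apply Lv|split; [apply Lv|split; [apply Lv|split; [apply Lv|]]]]].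
    + intros x Hx. split; [apply Dv; ring|split; [apply Dv; ring|split; apply Dv; ring]].
    + repeat split; apply L2_v; exact Hk.
  - unfold bc_H, v; cbv beta. rewrite Rmult_0_r, Ropp_0, exp_0.
    destruct alpha as [ar ai]. simpl in Hi, Ha1, Ha2. subst ai.
    split; apply injective_projections; simpl; rewrite ?Ha1, ?Ha2; field; lra.
  - intros x Hx. unfold v. apply injective_projections; simpl; ring.
  - exists 1. split; [lra|]. unfold v. intro H. apply (f_equal fst) in H. simpl in H.
    generalize (exp_pos (- (k * 1))). lra.
Qed.

Lemma dvalC (f : C -> C) (x a b : C) : is_derive (K:=C_AbsRing) (V:=C_NormedModule) f x a -> a = b ->
  is_derive (K:=C_AbsRing) (V:=C_NormedModule) f x b.
Proof. intros H ->; exact H. Qed.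

Lemma CmC : forall n m : C_AbsRing, mult n m = mult m n.
Proof. intros; apply Cmult_comm. Qed.

Lemma Dmon2 (z : C) : is_derive (K:=C_AbsRing) (fun w : C_AbsRing => mult w w) z (plus (mult one z) (mult z one)).
Proof. apply (is_derive_mult (K:=C_AbsRing) (fun w => w) (fun w => w) z one one); [apply is_derive_id|apply is_derive_id|apply CmC]. Qed.

Lemma Dpoly (c0 c1 c2 c3 z : C) :
  is_derive (K:=C_AbsRing) (V:=C_NormedModule)
    (fun w => c0 + c1 * w + c2 * (w * w) - c3 * (w * w * w) - w * w * w * w)%C z
    (c1 + 2 * c2 * z - 3 * c3 * (z * z) - 4 * (z * z * z))%C.
Proof.
  set (p2 := fun w : C_AbsRing => mult w w).
  set (p3 := fun w : C_AbsRing => mult w (p2 w)).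
  set (p4 := fun w : C_AbsRing => mult w (p3 w)).
  assert (D2 : is_derive (K:=C_AbsRing) p2 z (plus (mult one z) (mult z one))) by apply Dmon2.
  assert (D3 : is_derive (K:=C_AbsRing) p3 z (plus (mult one (p2 z)) (mult z (plus (mult one z) (mult z one))))).
  { apply (is_derive_mult (K:=C_AbsRing) (fun w => w) p2 z one); [apply is_derive_id|exact D2|apply CmC]. }
  assert (D4 : is_derive (K:=C_AbsRing) p4 z (plus (mult one (p3 z)) (mult z (plus (mult one (p2 z)) (mult z (plus (mult one z) (mult z one))))))).
  { apply (is_derive_mult (K:=C_AbsRing) (fun w => w) p3 z one); [apply is_derive_id|exact D3|apply CmC]. }
  apply (is_derive_ext (K:=C_AbsRing) (V:=C_NormedModule)
    (fun w => minus (minus (plus (plus c0 (scal w c1)) (scal (p2 w) c2)) (scal (p3 w) c3)) (scal (p4 w) (RtoC 1)))).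
  { intros t. unfold p4, p3, p2. unfold minus, plus, scal, opp; simpl; unfold mult; simpl. ring. }
  eapply dvalC.
  - apply (is_derive_minus (K:=C_AbsRing) (V:=C_NormedModule)).
    + apply (is_derive_minus (K:=C_AbsRing) (V:=C_NormedModule)).
      * apply (is_derive_plus (K:=C_AbsRing) (V:=C_NormedModule)).
        { apply (is_derive_plus (K:=C_AbsRing) (V:=C_NormedModule)).
          - apply (is_derive_const (K:=C_AbsRing) (V:=C_NormedModule)).
          - apply (is_derive_scal_l (K:=C_AbsRing) (V:=C_NormedModule)). apply is_derive_id. }
        { apply (is_derive_scal_l (K:=C_AbsRing) (V:=C_NormedModule)). exact D2. }
      * apply (is_derive_scal_l (K:=C_AbsRing) (V:=C_NormedModule)). exact D3.
    + apply (is_derive_scal_l (K:=C_AbsRing) (V:=C_NormedModule)). exact D4.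
  - unfold p4, p3, p2. unfold minus, plus, scal, opp; simpl; unfold mult, one, zero; simpl. ring.
Qed.

End Helpers.
Import Helpers.

Theorem proposition5p7 (alpha : C) (alpha1 alpha2 k : R) (hk : 0 < k) :
  (eigenvalue_H alpha alpha1 alpha2 (k ^ 4) <->
     (alpha = Cconj alpha /\
      RtoC alpha1 = ((alpha - RtoC (k ^ 2)) / RtoC k)%C /\
      RtoC alpha2 = ((alpha + RtoC (k ^ 2)) * RtoC k)%C)) /\
  (eigenvalue_H alpha alpha1 alpha2 (k ^ 4) ->
     Omega alpha alpha1 alpha2 (RtoC k) = RtoC 0 /\
     is_derive (K := C_AbsRing) (Omega alpha alpha1 alpha2) (RtoC k)
       ((- (RtoC 2 * RtoC k)) * (alpha - Ci * RtoC (k ^ 2)))%C /\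
     ((- (RtoC 2 * RtoC k)) * (alpha - Ci * RtoC (k ^ 2)))%C <> RtoC 0).
Proof.
  split.
  - split.
    + intros E. destruct (forward alpha alpha1 alpha2 k hk E) as [Hi [H1 H2]].
      destruct alpha as [ar ai]. simpl in Hi, H1, H2. subst ai.
      split; [unfold Cconj; simpl; rewrite Ropp_0; reflexivity|].
      change (ar, 0) with (RtoC ar).
      split.
      * rewrite H1, <- RtoC_minus, <- RtoC_div by lra. reflexivity.
      * rewrite H2, <- RtoC_plus, <- RtoC_mult. reflexivity.
    + intros [Hc [H1 H2]]. destruct alpha as [ar ai].
      assert (Hi : ai = 0) by (apply (f_equal snd) in Hc; simpl in Hc; lra).
      subst ai. change (ar, 0) with (RtoC ar) in H1, H2.
      rewrite <- RtoC_minus, <- RtoC_div in H1 by lra.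
      rewrite <- RtoC_plus, <- RtoC_mult in H2.
      apply (f_equal fst) in H1. apply (f_equal fst) in H2. simpl in H1, H2.
      apply backward; simpl; auto.
  - intros E. destruct (forward alpha alpha1 alpha2 k hk E) as [Hi [H1 H2]].
    destruct alpha as [ar ai]. simpl in Hi, H1, H2. subst ai.
    split; [|split].
    + unfold Omega, alpha0. rewrite H1, H2.
      change (ar, 0) with (RtoC ar). rewrite Cmod_R, pow2_abs.
      apply injective_projections; simpl; field; lra.
    + unfold Omega. eapply dvalC; [apply Dpoly|].
      rewrite H1, H2. apply injective_projections; simpl; field; lra.
    + intro H. apply (f_equal snd) in H. simpl in H. ring_simplify in H.
      assert (0 < k * (k * k)) by (repeat apply Rmult_lt_0_compat; lra). nra.
Qed.
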